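(* Let $C=w_1-\dots-w_m$ be a chain with $m\ge 2$ edges and positive weights. Then $C$ is extremal iff there is no admissible decomposition of $C$ into two subchains.
   Context: For a chain $C'=v_1-\dots-v_r$ ($r\ge 2$, positive weights): $L_1(C')=\max\{\sum_{i=1}^r v_ix_i : x\in\mathbb{R}^r,\ x_i^2+x_{i+1}^2\le 1\ \forall\,1\le i\le r-1\}$; $L_\emptyset(C')=\sqrt{(\sum_{i\text{ odd}}v_i)^2+(\sum_{i\text{ even}}v_i)^2}$; $C'$ is extremal if $L_1(C')=L_\emptyset(C')$. A decomposition of $C$ into $p+1$ subchains is given by integers $0=i_0<i_1<\dots<i_p<i_{p+1}=m$, with $C_j=w_{i_{j-1}+1}-\dots-w_{i_j}$. Let $\tilde\Sigma_{\rm odd}(C_j)=\sum\{w_i : i_{j-1}<i\le i_j,\ i\text{ odd}\}$, $\tilde\Sigma_{\rm even}(C_j)=\sum\{w_i : i_{j-1}<i\le i_j,\ i\text{ even}\}$ (parity with respect to the numbering in $C$), and $\Delta_j=\tilde\Sigma_{\rm even}(C_j)\tilde\Sigma_{\rm odd}(C_{j+1})-\tilde\Sigma_{\rm even}(C_{j+1})\tilde\Sigma_{\rm odd}(C_j)$ for $1\le j\le p$. The decomposition is admissible if every $C_j$ has at least two edges and, for every $1\le j\le p$, $\Delta_j<0$ when $i_j$ is even and $\Delta_j>0$ when $i_j$ is odd. *)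

(* Defs.v *)
From mathcomp Require Import all_boot all_order all_algebra.
From mathcomp Require Import reals.
Set Implicit Arguments. Unset Strict Implicit. Unset Printing Implicit Defensive.
Import Order.TTheory GRing.Theory Num.Theory.
Local Open Scope ring_scope.

(* A chain v_1 - ... - v_r is represented by the sequence v : seq R with
   v_i = v`_(i-1) (0-based storage).  Hence the paper's index i (1-based) is
   odd iff the 0-based index i-1 is even. *)

Section Chains.
Variable R : realType.

(* objective  sum_{i=1}^r v_i x_i  (x_i stored as x (i-1)) *)
Definition chain_obj (v : seq R) (x : nat -> R) : R :=
  \sum_(i < size v) v`_i * x i.

Definition chain_feasible (r : nat) (x : nat -> R) : Prop :=
  forall i : nat, (i.+1 < r)%N -> x i ^+ 2 + x i.+1 ^+ 2 <= 1.

Definition is_L1 (v : seq R) (L : R) : Prop :=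
  (exists x, chain_feasible (size v) x /\ chain_obj v x = L) /\
  (forall x, chain_feasible (size v) x -> chain_obj v x <= L).

Definition sum_odd (v : seq R) : R := \sum_(i < size v | ~~ odd i) v`_i.   (* 1-based odd *)
Definition sum_even (v : seq R) : R := \sum_(i < size v | odd i) v`_i.    (* 1-based even *)
Definition L_empty (v : seq R) : R :=
  Num.sqrt (sum_odd v ^+ 2 + sum_even v ^+ 2).

Definition extremal (v : seq R) : Prop := is_L1 v (L_empty v).

(* Sums over the subchain w_{a+1} - ... - w_b of w, parity w.r.t. the
   numbering in w (1-based index i+1 for storage index i). *)
Definition tsum_odd (w : seq R) (a b : nat) : R :=
  \sum_(a <= i < b | ~~ odd i) w`_i.
Definition tsum_even (w : seq R) (a b : nat) : R :=
  \sum_(a <= i < b | odd i) w`_i.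

(* Decomposition of w (m = size w) into two subchains given by
   0 = i_0 < i_1 = k < i_2 = m :  C_1 = w_1..w_k, C_2 = w_{k+1}..w_m. *)
Definition Delta2 (w : seq R) (k : nat) : R :=
  tsum_even w 0 k * tsum_odd w k (size w) - tsum_even w k (size w) * tsum_odd w 0 k.

Definition admissible_decomp2 (w : seq R) (k : nat) : Prop :=
  [/\ (0 < k)%N, (k < size w)%N,
      (2 <= k)%N, (2 <= size w - k)%N &
      (if odd k then 0 < Delta2 w k else Delta2 w k < 0)].

End Chains.

(* Main.v *)
Require Import Defs.
From mathcomp Require Import all_boot all_order all_algebra.
From mathcomp Require Import reals.
From mathcomp Require Import ring lra zify.
Import Order.TTheory GRing.Theory Num.Theory.
Local Open Scope ring_scope.

Section Aux.
Variable R : realType.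
Implicit Types (w : seq R).

Lemma tsum_odd_S w a n : (a <= n)%N ->
  tsum_odd w a n.+1 = tsum_odd w a n + (if odd n then 0 else w`_n).
Proof. by move=> h; rewrite /tsum_odd big_mkcond [in RHS]big_mkcond big_nat_recr //=; case: (odd n) => /=; rewrite ?addr0. Qed.

Lemma tsum_even_S w a n : (a <= n)%N ->
  tsum_even w a n.+1 = tsum_even w a n + (if odd n then w`_n else 0).
Proof. by move=> h; rewrite /tsum_even big_mkcond [in RHS]big_mkcond big_nat_recr //=; case: (odd n) => /=; rewrite ?addr0. Qed.

Lemma tsum_odd_cat w a k b : (a <= k)%N -> (k <= b)%N ->
  tsum_odd w a b = tsum_odd w a k + tsum_odd w k b.
Proof. by move=> h1 h2; rewrite /tsum_odd (big_cat_nat h1 h2). Qed.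

Lemma tsum_even_cat w a k b : (a <= k)%N -> (k <= b)%N ->
  tsum_even w a b = tsum_even w a k + tsum_even w k b.
Proof. by move=> h1 h2; rewrite /tsum_even (big_cat_nat h1 h2). Qed.

Lemma tsum_odd0 w a : tsum_odd w a a = 0.
Proof. by rewrite /tsum_odd big_geq. Qed.
Lemma tsum_even0 w a : tsum_even w a a = 0.
Proof. by rewrite /tsum_even big_geq. Qed.

Lemma tsum_pos w a b : (a.+2 <= b)%N -> (forall i, (i < size w)%N -> 0 < w`_i) ->
  (b <= size w)%N -> 0 < tsum_odd w a b /\ 0 < tsum_even w a b.
Proof.
move=> hab hpos hb.
have ge0 : forall P : pred nat, 0 <= \sum_(a.+2 <= i < b | P i) w`_i.
  move=> P; rewrite big_nat_cond; apply: sumr_ge0 => i /andP[/andP[_ hi] _].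
  by apply/ltW/hpos; apply: leq_trans hb.
have p0 : 0 < w`_a by apply: hpos; apply: leq_trans hb; apply: leq_trans hab.
have p1 : 0 < w`_a.+1 by apply: hpos; apply: leq_trans hb.
have two : forall P : pred nat, \sum_(a <= i < a.+2 | P i) w`_i =
   (if P a then w`_a else 0) + (if P a.+1 then w`_a.+1 else 0).
  by move=> P; rewrite big_mkcond big_nat_recr // big_nat1; reflexivity.
have haa : (a <= a.+2)%N by rewrite leqW.
rewrite /tsum_odd /tsum_even !(big_cat_nat haa hab) !two /=.
have := ge0 (fun i => ~~ odd i); have := ge0 (fun i => odd i).
by case: (odd a) => /= h1 h2; split; lra.
Qed.

Lemma sum_mix w a b p q :
  \sum_(a <= i < b) w`_i * (if odd i then q else p) =
  p * tsum_odd w a b + q * tsum_even w a b.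
Proof.
rewrite (bigID odd) /= addrC /tsum_odd /tsum_even !mulr_sumr.
by congr (_ + _); apply: eq_bigr => i; [move/negbTE -> | move ->]; rewrite mulrC.
Qed.

Lemma abel (E t : nat -> R) k : E 0%N = 0 ->
  \sum_(0 <= i < k.+1) (E i + E i.+1) * t i =
  \sum_(0 <= j < k) E j.+1 * (t j + t j.+1) + E k.+1 * t k.
Proof.
move=> E0; elim: k => [|k IH].
  by rewrite big_nat1 big_geq // E0 !add0r.
by rewrite big_nat_recr //= IH [in RHS]big_nat_recr //=; ring.
Qed.

Lemma cs_bound (a b p q L : R) : 0 <= L -> L ^+ 2 = a ^+ 2 + b ^+ 2 ->
  p ^+ 2 + q ^+ 2 <= 1 -> a * p + b * q <= L.
Proof.
move=> L0 hL hpq.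
have h := sqr_ge0 (a * q - b * p).
have h2 : (a * p + b * q) ^+ 2 <= L ^+ 2.
  rewrite hL. have h3 : 0 <= a ^+ 2 + b ^+ 2 by nra. nra.
nra.
Qed.

Lemma sq_lt (u v : R) : 0 <= u -> 0 <= v -> u ^+ 2 < v ^+ 2 -> u < v.
Proof. move=> hu hv h; nra. Qed.

Lemma unit_pair (p q L : R) : 0 < L -> L ^+ 2 = p ^+ 2 + q ^+ 2 ->
  (p / L) ^+ 2 + (q / L) ^+ 2 = 1.
Proof.
move=> L0 hL; rewrite !expr_div_n -mulrDl -hL divff //.
by rewrite expf_neq0 // gt_eqF.
Qed.

Lemma pair_val (p q L : R) : 0 < L -> L ^+ 2 = p ^+ 2 + q ^+ 2 ->
  p / L * p + q / L * q = L.
Proof.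
move=> L0 hL.
have -> : p / L * p + q / L * q = (p ^+ 2 + q ^+ 2) / L.
  by rewrite !expr2; field; rewrite gt_eqF.
by rewrite -hL; field; rewrite gt_eqF.
Qed.

Lemma bnd (p1 q1 p2 q2 L1 L2 : R) : 0 < L1 -> 0 < L2 ->
  L1 ^+ 2 = p1 ^+ 2 + q1 ^+ 2 -> L2 ^+ 2 = p2 ^+ 2 + q2 ^+ 2 ->
  0 <= p1 * p2 -> p1 * p2 <= q1 * q2 -> (p1 / L1) ^+ 2 + (p2 / L2) ^+ 2 <= 1.
Proof.
move=> h1 h2 e1 e2 g0 g1.
have -> : (p1 / L1) ^+ 2 + (p2 / L2) ^+ 2 =
   (p1 ^+ 2 * L2 ^+ 2 + p2 ^+ 2 * L1 ^+ 2) / (L1 ^+ 2 * L2 ^+ 2).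
  by field; rewrite !gt_eqF.
rewrite ler_pdivrMr; last by apply: mulr_gt0; apply: exprn_gt0.
rewrite mul1r e1 e2.
have h0 : 0 <= q1 * q2 - p1 * p2 by rewrite subr_ge0.
have h := mulr_ge0 h0 (addr_ge0 (le_trans g0 g1) g0).
nra.
Qed.

Lemma sq_pos (d : R) : (0 < d \/ d < 0) -> 0 < d ^+ 2.
Proof. by case=> h; nra. Qed.

Lemma pos_div (f y p : R) : 0 < y -> f * y = p -> 0 < p -> 0 <= f.
Proof. by move=> hy <- hp; apply: ltW; rewrite -(pmulr_lgt0 _ hy). Qed.

Lemma tri_ineq (A1 B1 A2 B2 L1 L2 L : R) : 0 < A1 -> 0 < B1 -> 0 < A2 -> 0 < B2 ->
  0 < L1 -> 0 < L2 -> 0 < L ->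
  L1 ^+ 2 = A1 ^+ 2 + B1 ^+ 2 -> L2 ^+ 2 = A2 ^+ 2 + B2 ^+ 2 ->
  L ^+ 2 = (A1 + A2) ^+ 2 + (B1 + B2) ^+ 2 ->
  0 < (B1 * A2 - B2 * A1) ^+ 2 -> L < L1 + L2.
Proof.
move=> a1 b1 a2 b2 l1 l2 l e1 e2 e hd.
have P : A1 * A2 + B1 * B2 < L1 * L2.
  apply: sq_lt.
  - by apply: addr_ge0; apply: mulr_ge0; apply: ltW.
  - by apply: mulr_ge0; apply: ltW.
  have -> : (L1 * L2) ^+ 2 = (A1 * A2 + B1 * B2) ^+ 2 + (B1 * A2 - B2 * A1) ^+ 2.
    by rewrite exprMn e1 e2; ring.
  by rewrite ltrDl.
apply: sq_lt.
- exact: ltW.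
- by apply: addr_ge0; apply: ltW.
have -> : (L1 + L2) ^+ 2 = L1 ^+ 2 + L2 ^+ 2 + 2 * (L1 * L2) by ring.
have -> : L ^+ 2 = A1 ^+ 2 + B1 ^+ 2 + (A2 ^+ 2 + B2 ^+ 2) + 2 * (A1 * A2 + B1 * B2).
  by rewrite e; ring.
rewrite e1 e2; lra.
Qed.

End Aux.
Arguments unit_pair {R} p q L. Arguments bnd {R} p1 q1 p2 q2 L1 L2.
Arguments pair_val {R} p q L. Arguments cs_bound {R} a b p q L.
Arguments sq_lt {R} u v. Arguments sq_pos {R} d. Arguments pos_div {R} f y p. Arguments tri_ineq {R} A1 B1 A2 B2 L1 L2 L. Arguments tsum_odd_cat {R} w [a k b]. Arguments tsum_even_cat {R} w [a k b]. Arguments sum_mix {R} w a b p q.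

Section Main.
Variable R : realType.
Variable w : seq R.

Definition Aw := tsum_odd w 0 (size w).
Definition Bw := tsum_even w 0 (size w).
Definition DD k := tsum_odd w 0 k * Bw - tsum_even w 0 k * Aw.
Definition FF k := if odd k then DD k else - DD k.
Definition yy i := if odd i then Bw else Aw.

Lemma Fstep i : (FF i + FF i.+1) * yy i = w`_i * (Aw * Bw).
Proof.
rewrite /FF /DD /yy tsum_odd_S // tsum_even_S //=.
by case: (odd i) => /=; ring.
Qed.

Lemma F0 : FF 0 = 0.
Proof. by rewrite /FF /DD /= tsum_odd0 tsum_even0; ring. Qed.

Lemma Fm : FF (size w) = 0.
Proof. by rewrite /FF /DD -/Aw -/Bw; case: (odd _); ring. Qed.

Lemma Delta2E k : (k <= size w)%N -> Delta2 w k = - DD k.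
Proof.
move=> hk; rewrite /Delta2 /DD /Aw /Bw (@tsum_odd_cat R w 0 k (size w) (leq0n k) hk)
  (@tsum_even_cat R w 0 k (size w) (leq0n k) hk); ring.
Qed.

Lemma keygen (z : nat -> R) k : size w = k.+1 ->
  (\sum_(0 <= i < size w) w`_i * z i) * (Aw * Bw) =
  \sum_(0 <= j < k) FF j.+1 * (yy j * z j + yy j.+1 * z j.+1).
Proof.
move=> hs.
rewrite mulr_suml.
have -> : \sum_(0 <= i < size w) w`_i * z i * (Aw * Bw) =
          \sum_(0 <= i < size w) (FF i + FF i.+1) * (yy i * z i).
  by apply: eq_bigr => i _; rewrite [RHS]mulrA Fstep; ring.
rewrite hs abel ?F0 // -hs Fm mul0r addr0.
done.
Qed.

End Main.
Arguments Aw {R} w. Arguments Bw {R} w. Arguments DD {R} w k. Arguments FF {R} w k.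
Arguments yy {R} w i. Arguments Fstep {R} w i. Arguments F0 {R} w. Arguments Fm {R} w.
Arguments Delta2E {R} w [k]. Arguments keygen {R} w z [k].

Lemma sum_oddE (R : realType) (w : seq R) : sum_odd w = tsum_odd w 0 (size w).
Proof. by rewrite /sum_odd /tsum_odd big_mkord. Qed.
Lemma sum_evenE (R : realType) (w : seq R) : sum_even w = tsum_even w 0 (size w).
Proof. by rewrite /sum_even /tsum_even big_mkord. Qed.
Lemma objE (R : realType) (w : seq R) x :
  chain_obj w x = \sum_(0 <= i < size w) w`_i * x i.
Proof. by rewrite /chain_obj big_mkord. Qed.

Theorem mainTheorem9 (R : realType) (w : seq R) :
  (2 <= size w)%N ->
  (forall i : nat, (i < size w)%N -> 0 < w`_i) ->
  (extremal w <-> ~ (exists k : nat, admissible_decomp2 w k)).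
Proof.
move=> hm hpos.
have [hA hB] : 0 < Aw w /\ 0 < Bw w by apply: tsum_pos.
set L := L_empty w.
have LE : L = Num.sqrt (Aw w ^+ 2 + Bw w ^+ 2) by rewrite /L /L_empty sum_oddE sum_evenE.
have hS0 : 0 < Aw w ^+ 2 + Bw w ^+ 2 by apply: addr_gt0; apply: exprn_gt0.
have L0 : 0 < L by rewrite LE sqrtr_gt0.
have HL2 : L ^+ 2 = Aw w ^+ 2 + Bw w ^+ 2 by rewrite LE sqr_sqrtr // ltW.
split.
- move=> [_ hmax] [k [k0 km k2 k3 hD]].
  have hkm : (k.+2 <= size w)%N by clear -k3; lia.
  have [hA1 hB1] : 0 < tsum_odd w 0 k /\ 0 < tsum_even w 0 k.
    by apply: tsum_pos => //; apply: ltnW.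
  have [hA2 hB2] : 0 < tsum_odd w k (size w) /\ 0 < tsum_even w k (size w).
    by apply: tsum_pos.
  have hL : L = Num.sqrt ((tsum_odd w 0 k + tsum_odd w k (size w)) ^+ 2
                        + (tsum_even w 0 k + tsum_even w k (size w)) ^+ 2).
    by rewrite LE /Aw /Bw -(tsum_odd_cat w (leq0n k) (ltnW km))
       -(tsum_even_cat w (leq0n k) (ltnW km)).
  rewrite /Delta2 in hD.
  set A1 := tsum_odd w 0 k in hA1 hL hD *.
  set B1 := tsum_even w 0 k in hB1 hL hD *.
  set A2 := tsum_odd w k (size w) in hA2 hL hD *.
  set B2 := tsum_even w k (size w) in hB2 hL hD *.
  set L1 := Num.sqrt (A1 ^+ 2 + B1 ^+ 2).
  set L2 := Num.sqrt (A2 ^+ 2 + B2 ^+ 2).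
  have hL1 : 0 < L1 by rewrite sqrtr_gt0 addr_gt0 // exprn_gt0.
  have hL2 : 0 < L2 by rewrite sqrtr_gt0 addr_gt0 // exprn_gt0.
  have e1 : L1 ^+ 2 = A1 ^+ 2 + B1 ^+ 2 by rewrite sqr_sqrtr // ltW // addr_gt0 // exprn_gt0.
  have e2 : L2 ^+ 2 = A2 ^+ 2 + B2 ^+ 2 by rewrite sqr_sqrtr // ltW // addr_gt0 // exprn_gt0.
  pose x := fun i => if (i < k)%N then (if odd i then B1 / L1 else A1 / L1)
                     else (if odd i then B2 / L2 else A2 / L2).
  have feas : chain_feasible (size w) x.
    move=> i hi; rewrite /x /=.
    case: (ltnP i.+1 k) => h.
      have f1 : (i < k)%N by apply: ltnW.
      rewrite f1 /=; case: (odd i) => /=.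
        by rewrite (unit_pair B1 A1 L1) // addrC.
      by rewrite (unit_pair A1 B1 L1).
    have [ek|ne] := eqVneq i.+1 k.
      have f1 : (i < k)%N by rewrite -ek ltnSn.
      have f2 : (i.+1 < k)%N = false by rewrite ek ltnn.
      rewrite f1 /=; rewrite -ek /= in hD.
      case: (odd i) hD => /= hD.
        apply: (bnd B1 A1 A2 B2 L1 L2) => //; first by rewrite addrC.
          by apply: mulr_ge0; apply: ltW.
        by rewrite [A1 * B2]mulrC -subr_le0; apply: ltW.
      apply: (bnd A1 B1 B2 A2 L1 L2) => //; first by rewrite addrC.
        by apply: mulr_ge0; apply: ltW.
      by rewrite [A1 * B2]mulrC -subr_ge0; apply: ltW.
    have hki : (k <= i)%N by rewrite -ltnS ltn_neqAle eq_sym ne h.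
    have f1 : (i < k)%N = false by rewrite ltnNge hki.
    have f2 : (i.+1 < k)%N = false by rewrite ltnNge h.
    rewrite f1 ?f2 /=; case: (odd i) => /=.
      by rewrite (unit_pair B2 A2 L2) // addrC.
    by rewrite (unit_pair A2 B2 L2).
  have obj : chain_obj w x = L1 + L2.
    rewrite objE (big_cat_nat (leq0n k) (ltnW km)) /=.
    have -> : \sum_(0 <= i < k) w`_i * x i =
              \sum_(0 <= i < k) w`_i * (if odd i then B1 / L1 else A1 / L1).
      by apply: eq_big_nat => i /andP[_ hi]; rewrite /x hi.
    have -> : \sum_(k <= i < size w) w`_i * x i =
              \sum_(k <= i < size w) w`_i * (if odd i then B2 / L2 else A2 / L2).
      by apply: eq_big_nat => i /andP[hi _]; rewrite /x ltnNge hi.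
    rewrite !sum_mix -/A1 -/B1 -/A2 -/B2.
    by rewrite (pair_val A1 B1 L1) // (pair_val A2 B2 L2).
  have := hmax x feas; rewrite obj -/L; apply/negP; rewrite -ltNge.
  have Lsq : L ^+ 2 = (A1 + A2) ^+ 2 + (B1 + B2) ^+ 2.
    by rewrite hL sqr_sqrtr // addr_ge0 // sqr_ge0.
  have hd : 0 < (B1 * A2 - B2 * A1) ^+ 2.
    by apply: sq_pos; case: (odd k) hD => hD; [left | right].
  by apply: (tri_ineq A1 B1 A2 B2 L1 L2 L).
- move=> hna.
  have hF : forall k, (0 < k < size w)%N -> 0 <= FF w k.
    move=> k /andP[k0 km].
    have [->|k1] := eqVneq k 1%N.
      have := Fstep w 0; rewrite F0 add0r /yy /= => h.
      have p := hpos 0%N (ltnW hm).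
      exact: (pos_div _ _ _ hA h (mulr_gt0 p (mulr_gt0 hA hB))).
    have [ek|k2] := eqVneq k.+1 (size w).
      have := Fstep w k; rewrite ek Fm addr0 => h.
      have p := hpos k km.
      have pp := mulr_gt0 p (mulr_gt0 hA hB).
      by rewrite /yy in h; case: (odd k) h => h; [exact: (pos_div _ _ _ hB h pp) | exact: (pos_div _ _ _ hA h pp)].
    rewrite leNgt; apply/negP => Fn; apply: hna; exists k.
    split; [by [] | by [] | by clear -k0 k1; lia | by clear -km k2; lia |].
    rewrite Delta2E; last exact: ltnW.
    rewrite /FF in Fn.
    by case: (odd k) Fn => Fn //; rewrite oppr_gt0.
  split.
    exists (fun i => if odd i then Bw w / L else Aw w / L); split.
      move=> i hi /=; case: (odd i) => /=.
        by rewrite (unit_pair (Bw w) (Aw w) L) // addrC.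
      by rewrite (unit_pair (Aw w) (Bw w) L).
    by rewrite objE sum_mix; apply: pair_val.
  move=> x hx.
  have [k hs] : exists k, size w = k.+1 by exists (size w).-1; rewrite prednK // ltnW.
  have K1 := keygen w x hs; rewrite -objE in K1.
  have K2 := keygen w (yy w) hs.
  have e2 : \sum_(0 <= i < size w) w`_i * yy w i = Aw w * Aw w + Bw w * Bw w.
    exact: sum_mix.
  have e3 : \sum_(0 <= j < k) FF w j.+1 * (yy w j * yy w j + yy w j.+1 * yy w j.+1)
          = (\sum_(0 <= j < k) FF w j.+1) * (Aw w ^+ 2 + Bw w ^+ 2).
    rewrite mulr_suml; apply: eq_bigr => j _; rewrite /yy /=.
    by case: (odd j) => /=; ring.
  have hS : \sum_(0 <= j < k) FF w j.+1 = Aw w * Bw w.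
    apply: (mulIf (x := Aw w ^+ 2 + Bw w ^+ 2)); first by rewrite gt_eqF.
    rewrite /= -e3 -K2 e2; ring.
  have hb : \sum_(0 <= j < k) FF w j.+1 * (yy w j * x j + yy w j.+1 * x j.+1)
            <= \sum_(0 <= j < k) FF w j.+1 * L.
    rewrite big_nat_cond [X in _ <= X]big_nat_cond.
    apply: ler_sum => j /andP[/andP[_ hj] _].
    apply: ler_wpM2l.
      by apply: hF; rewrite hs; clear -hj; lia.
    have hxj := hx j (ltac:(rewrite hs; clear -hj; lia)).
    rewrite /yy /=; case: (odd j) => /=.
      by apply: cs_bound => //; [exact: ltW | rewrite addrC].
    by apply: cs_bound => //; exact: ltW.
  rewrite -(ler_pM2r (mulr_gt0 hA hB)) K1.
  apply: le_trans hb _.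
  by rewrite -mulr_suml hS mulrC.
Qed.
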